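(* Let $U\subset\mathbb{R}^n$ be a bounded domain with smooth boundary and let $(u_1,u_2)\in C(\overline U)^2$ be a viscosity solution of the system (S) in $U$. Then for every $x_0\in U$ and $i\in\{1,2\}$ the limit $S_i^+(x_0):=\lim_{r\to0^+}S_i^+(x_0,r)$ exists in $\mathbb{R}$.
   Context: For $\varphi\in C^2$ near $x$, set $\Delta_\infty\varphi(x)=|D\varphi(x)|^{-2}\sum_{k,l=1}^n\varphi_{x_k}\varphi_{x_l}\varphi_{x_kx_l}(x)$ when $D\varphi(x)\neq0$. Define $\Delta_\infty^+\varphi(x)=\Delta_\infty\varphi(x)$ if $D\varphi(x)\ne0$ and $\Delta_\infty^+\varphi(x)=\max\{D^2\varphi(x)v\cdot v: v\in\mathbb{S}^{n-1}\}$ if $D\varphi(x)=0$; define $\Delta_\infty^-\varphi(x)$ in the same way with $\min$ in place of $\max$. The system (S) on an open set $\Omega$ is: $-\Delta_\infty u_1+u_1-u_2=0$ and $-\Delta_\infty u_2+u_2-u_1=0$ in $\Omega$. A pair $(u_1,u_2)$ of upper semicontinuous functions on $\Omega$ is a viscosity subsolution of (S) in $\Omega$ if for each $i\in\{1,2\}$, $j=3-i$, and each $\varphi\in C^2(\Omega)$ such that $u_i-\varphi$ has a local maximum at $x_0\in\Omega$, one has $-\Delta_\infty^+\varphi(x_0)+u_i(x_0)-u_j(x_0)\le0$. A pair of lower semicontinuous functions on $\Omega$ is a viscosity supersolution if for each $i$, $j=3-i$, and each $\varphi\in C^2(\Omega)$ such that $u_i-\varphi$ has a local minimum at $x_0\in\Omega$,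 one has $-\Delta_\infty^-\varphi(x_0)+u_i(x_0)-u_j(x_0)\ge0$. A viscosity solution is a pair that is both a subsolution and a supersolution. For $x_0\in U$, $r>0$ with $\overline B(x_0,r)\subset U$: $S_i^+(x_0,r)=\frac{\max_{|y-x_0|=r}u_i(y)-u_i(x_0)}{r}$. *)

(* Defs.v *)
From Stdlib Require Import Reals Lra Arith.
Open Scope R_scope.

Definition idx (n : nat) := {k : nat | (k < n)%nat}.
Definition Rn (n : nat) := idx n -> R.

Definition coordN {n : nat} (f : idx n -> R) (k : nat) : R :=
  match lt_dec k n with
  | left p => f (exist _ k p)
  | right _ => 0
  end.

Fixpoint sumN (m : nat) (f : nat -> R) : R :=
  match m with
  | O => 0
  | S m' => sumN m' f + f m'
  end.

Definition sumI {n : nat} (f : idx n -> R) : R := sumN n (coordN f).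

Definition dot {n : nat} (x y : Rn n) : R := sumI (fun k => x k * y k).
Definition norm {n : nat} (x : Rn n) : R := sqrt (dot x x).
Definition dist {n : nat} (x y : Rn n) : R := norm (fun k => x k - y k).

Definition shift {n : nat} (x : Rn n) (k : idx n) (t : R) : Rn n :=
  fun j => x j + (if Nat.eq_dec (proj1_sig j) (proj1_sig k) then t else 0).

Definition ball {n : nat} (x0 : Rn n) (r : R) : Rn n -> Prop :=
  fun y => dist y x0 < r.
Definition cball {n : nat} (x0 : Rn n) (r : R) : Rn n -> Prop :=
  fun y => dist y x0 <= r.
Definition sphere {n : nat} (x0 : Rn n) (r : R) : Rn n -> Prop :=
  fun y => dist y x0 = r.

Definition is_open {n : nat} (O : Rn n -> Prop) : Prop :=
  forall x, O x -> exists r, 0 < r /\ forall y, dist y x < r -> O y.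

Definition closure {n : nat} (O : Rn n -> Prop) : Rn n -> Prop :=
  fun x => forall eps, 0 < eps -> exists y, O y /\ dist y x < eps.

Definition boundary {n : nat} (O : Rn n -> Prop) : Rn n -> Prop :=
  fun x => closure O x /\ ~ O x.

Definition is_bounded {n : nat} (O : Rn n -> Prop) : Prop :=
  exists M, forall x, O x -> norm x <= M.

Definition is_connected {n : nat} (O : Rn n -> Prop) : Prop :=
  forall A B : Rn n -> Prop, is_open A -> is_open B ->
    (forall x, O x -> A x \/ B x) ->
    (exists x, O x /\ A x) -> (exists x, O x /\ B x) ->
    exists x, O x /\ A x /\ B x.

Definition is_domain {n : nat} (O : Rn n -> Prop) : Prop :=
  is_open O /\ is_connected O /\ exists x, O x.

Definition cont_on {n : nat} (S : Rn n -> Prop) (f : Rn n -> R) : Prop :=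
  forall x, S x -> forall eps, 0 < eps -> exists d, 0 < d /\
    forall y, S y -> dist y x < d -> Rabs (f y - f x) < eps.

Definition usc_on {n : nat} (S : Rn n -> Prop) (f : Rn n -> R) : Prop :=
  forall x, S x -> forall eps, 0 < eps -> exists d, 0 < d /\
    forall y, S y -> dist y x < d -> f y < f x + eps.

Definition lsc_on {n : nat} (S : Rn n -> Prop) (f : Rn n -> R) : Prop :=
  forall x, S x -> forall eps, 0 < eps -> exists d, 0 < d /\
    forall y, S y -> dist y x < d -> f x - eps < f y.

Definition is_partial {n : nat} (S : Rn n -> Prop) (k : idx n)
  (f g : Rn n -> R) : Prop :=
  forall x, S x -> derivable_pt_lim (fun t => f (shift x k t)) 0 (g x).

Fixpoint Ck {n : nat} (m : nat) (S : Rn n -> Prop) (f : Rn n -> R) : Prop :=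
  match m with
  | O => cont_on S f
  | S m' => cont_on S f /\
      forall k : idx n, exists g, is_partial S k f g /\ Ck m' S g
  end.

Definition Cinf {n : nat} (S : Rn n -> Prop) (f : Rn n -> R) : Prop :=
  forall m, Ck m S f.

Definition smooth_boundary {n : nat} (U : Rn n -> Prop) : Prop :=
  forall x0, boundary U x0 ->
    exists r, 0 < r /\ exists rho : Rn n -> R,
      Cinf (ball x0 r) rho /\
      (exists Drho : idx n -> Rn n -> R,
         (forall k, is_partial (ball x0 r) k rho (Drho k)) /\
         (forall x, ball x0 r x -> exists k, Drho k x <> 0)) /\
      (forall x, ball x0 r x -> (U x <-> rho x < 0)).

(* phi is C^2 on Om with gradient Dphi and Hessian D2phi,
   D2phi k l = d/dx_l (d phi / dx_k) = phi_{x_k x_l} *)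
Definition C2_with {n : nat} (Om : Rn n -> Prop) (phi : Rn n -> R)
  (Dphi : idx n -> Rn n -> R) (D2phi : idx n -> idx n -> Rn n -> R) : Prop :=
  cont_on Om phi /\
  (forall k, is_partial Om k phi (Dphi k) /\ cont_on Om (Dphi k)) /\
  (forall k l, is_partial Om l (Dphi k) (D2phi k l) /\ cont_on Om (D2phi k l)).

Definition grad_sq {n : nat} (Dphi : idx n -> Rn n -> R) (x : Rn n) : R :=
  sumI (fun k => Dphi k x ^ 2).

Definition hess_quad {n : nat} (D2phi : idx n -> idx n -> Rn n -> R)
  (x v : Rn n) : R :=
  sumI (fun k => sumI (fun l => D2phi k l x * v k * v l)).

(* Delta_infinity phi(x) for nonzero gradient *)
Definition inf_lap {n : nat} (Dphi : idx n -> Rn n -> R)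
  (D2phi : idx n -> idx n -> Rn n -> R) (x : Rn n) : R :=
  / grad_sq Dphi x *
  sumI (fun k => sumI (fun l => Dphi k x * Dphi l x * D2phi k l x)).

Definition unit_vec {n : nat} (v : Rn n) : Prop := norm v = 1.

Definition is_max_on {n : nat} (f : Rn n -> R) (S : Rn n -> Prop) (m : R) : Prop :=
  (exists y, S y /\ f y = m) /\ (forall y, S y -> f y <= m).

Definition is_min_on {n : nat} (f : Rn n -> R) (S : Rn n -> Prop) (m : R) : Prop :=
  (exists y, S y /\ f y = m) /\ (forall y, S y -> m <= f y).

Definition inf_lap_plus {n : nat} (Dphi : idx n -> Rn n -> R)
  (D2phi : idx n -> idx n -> Rn n -> R) (x : Rn n) (val : R) : Prop :=
  (grad_sq Dphi x <> 0 /\ val = inf_lap Dphi D2phi x) \/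
  (grad_sq Dphi x = 0 /\ is_max_on (hess_quad D2phi x) unit_vec val).

Definition inf_lap_minus {n : nat} (Dphi : idx n -> Rn n -> R)
  (D2phi : idx n -> idx n -> Rn n -> R) (x : Rn n) (val : R) : Prop :=
  (grad_sq Dphi x <> 0 /\ val = inf_lap Dphi D2phi x) \/
  (grad_sq Dphi x = 0 /\
     is_min_on (hess_quad D2phi x) unit_vec val).

Definition local_max_at {n : nat} (Om : Rn n -> Prop) (f : Rn n -> R)
  (x0 : Rn n) : Prop :=
  exists r, 0 < r /\ forall y, Om y -> dist y x0 < r -> f y <= f x0.

Definition local_min_at {n : nat} (Om : Rn n -> Prop) (f : Rn n -> R)
  (x0 : Rn n) : Prop :=
  exists r, 0 < r /\ forall y, Om y -> dist y x0 < r -> f x0 <= f y.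

(* subsolution condition for the i-th equation: ui, uj = u_{3-i} *)
Definition sub_cond {n : nat} (Om : Rn n -> Prop) (ui uj : Rn n -> R) : Prop :=
  forall phi Dphi D2phi x0, C2_with Om phi Dphi D2phi -> Om x0 ->
    local_max_at Om (fun y => ui y - phi y) x0 ->
    forall val, inf_lap_plus Dphi D2phi x0 val ->
      - val + ui x0 - uj x0 <= 0.

Definition super_cond {n : nat} (Om : Rn n -> Prop) (ui uj : Rn n -> R) : Prop :=
  forall phi Dphi D2phi x0, C2_with Om phi Dphi D2phi -> Om x0 ->
    local_min_at Om (fun y => ui y - phi y) x0 ->
    forall val, inf_lap_minus Dphi D2phi x0 val ->
      - val + ui x0 - uj x0 >= 0.

Definition visc_subsolution {n : nat} (Om : Rn n -> Prop) (u1 u2 : Rn n -> R) : Prop :=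
  usc_on Om u1 /\ usc_on Om u2 /\ sub_cond Om u1 u2 /\ sub_cond Om u2 u1.

Definition visc_supersolution {n : nat} (Om : Rn n -> Prop) (u1 u2 : Rn n -> R) : Prop :=
  lsc_on Om u1 /\ lsc_on Om u2 /\ super_cond Om u1 u2 /\ super_cond Om u2 u1.

Definition visc_solution {n : nat} (Om : Rn n -> Prop) (u1 u2 : Rn n -> R) : Prop :=
  visc_subsolution Om u1 u2 /\ visc_supersolution Om u1 u2.

(* m = max_{|y-x0|=r} u(y), so S^+(x0,r) = (m - u(x0)) / r *)
Definition S_plus_lim_exists {n : nat} (U : Rn n -> Prop) (u : Rn n -> R)
  (x0 : Rn n) : Prop :=
  exists L : R, forall eps, 0 < eps -> exists d, 0 < d /\
    forall r m, 0 < r -> r < d -> (forall y, cball x0 r y -> U y) ->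
      is_max_on u (sphere x0 r) m ->
      Rabs ((m - u x0) / r - L) < eps.

(* Main.v *)
Require Import Defs.
From Stdlib Require Import Reals Lra Lia Arith Classical ClassicalEpsilon FunctionalExtensionality.
From Coquelicot Require Import Coquelicot.
Require Import Defs.
Open Scope R_scope.

Lemma sumN_ext m f g : (forall k, (k < m)%nat -> f k = g k) -> sumN m f = sumN m g.
Proof. induction m; simpl; intros; auto. rewrite IHm by (intros; apply H; lia). rewrite H by lia. auto. Qed.

Lemma sumN_plus m f g : sumN m (fun k => f k + g k) = sumN m f + sumN m g.
Proof. induction m; simpl; [lra|]. rewrite IHm. lra. Qed.

Lemma sumN_scal m c f : sumN m (fun k => c * f k) = c * sumN m f.
Proof. induction m; simpl; [lra|]. rewrite IHm. lra. Qed.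

Lemma sumN_le m f g : (forall k, (k < m)%nat -> f k <= g k) -> sumN m f <= sumN m g.
Proof. induction m; simpl; intros; [lra|]. assert (f m <= g m) by (apply H; lia).
 assert (sumN m f <= sumN m g) by (apply IHm; intros; apply H; lia). lra. Qed.

Lemma sumN_const m c : sumN m (fun _ => c) = INR m * c.
Proof. induction m; simpl sumN; [simpl; lra|]. rewrite IHm, S_INR. lra. Qed.

Lemma sumN_delta m j a : sumN m (fun k => if Nat.eq_dec k j then a else 0) = if lt_dec j m then a else 0.
Proof. induction m; simpl.
 - destruct (lt_dec j 0); [lia|auto].
 - rewrite IHm. destruct (Nat.eq_dec m j); destruct (lt_dec j m); destruct (lt_dec j (S m)); try lia; lra.
Qed.

Lemma sumN_term_le m f j : (forall k, (k < m)%nat -> 0 <= f k) -> (j < m)%nat -> f j <= sumN m f.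
Proof. induction m; simpl; intros; [lia|].
 assert (0 <= sumN m f). { clear IHm H0. induction m; simpl; [lra|].
   assert (0 <= f m) by (apply H; lia). assert (0 <= sumN m f) by (apply IHm; intros; apply H; lia). lra. }
 destruct (Nat.eq_dec j m). subst. lra.
 assert (f j <= sumN m f) by (apply IHm; auto; lia). assert (0 <= f m) by (apply H; lia). lra. Qed.

Lemma idx_eq {n} (a b : idx n) : proj1_sig a = proj1_sig b -> a = b.
Proof. destruct a as [a pa], b as [b pb]; simpl; intros; subst. f_equal. apply Peano_dec.le_unique. Qed.

Lemma coordN_idx {n} (f : idx n -> R) (k : idx n) : coordN f (proj1_sig k) = f k.
Proof. unfold coordN. destruct (lt_dec (proj1_sig k) n). f_equal. apply idx_eq. reflexivity.
 destruct k; simpl in *; lia. Qed.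

Lemma sumI_ext {n} (f g : idx n -> R) : (forall k, f k = g k) -> sumI f = sumI g.
Proof. intros H. unfold sumI. apply sumN_ext. intros. unfold coordN. destruct (lt_dec k n); auto. Qed.

Lemma sumI_plus {n} (f g : idx n -> R) : sumI (fun k => f k + g k) = sumI f + sumI g.
Proof. unfold sumI. rewrite <- sumN_plus. apply sumN_ext. intros. unfold coordN. destruct (lt_dec k n); lra. Qed.

Lemma sumI_scal {n} c (f : idx n -> R) : sumI (fun k => c * f k) = c * sumI f.
Proof. unfold sumI. rewrite <- sumN_scal. apply sumN_ext. intros. unfold coordN. destruct (lt_dec k n); lra. Qed.

Lemma sumI_le {n} (f g : idx n -> R) : (forall k, f k <= g k) -> sumI f <= sumI g.
Proof. intros H. unfold sumI. apply sumN_le. intros. unfold coordN. destruct (lt_dec k n); auto; lra. Qed.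

Lemma sumI_const {n} c : @sumI n (fun _ => c) = INR n * c.
Proof. unfold sumI. rewrite <- sumN_const. apply sumN_ext. intros. unfold coordN. destruct (lt_dec k n); lia || auto. Qed.

Lemma sumI_zero {n} : @sumI n (fun _ => 0) = 0.
Proof. rewrite sumI_const. ring. Qed.

Lemma sumI_term_le {n} (f : idx n -> R) k : (forall j, 0 <= f j) -> f k <= sumI f.
Proof. intros H. unfold sumI. rewrite <- (coordN_idx f k) at 1. apply sumN_term_le.
 intros. unfold coordN. destruct (lt_dec k0 n); auto. lra. destruct k; simpl; auto. Qed.

Lemma sumI_nonneg {n} (f : idx n -> R) : (forall j, 0 <= f j) -> 0 <= sumI f.
Proof. intros. rewrite <- (@sumI_zero n). apply sumI_le. auto. Qed.

Definition delta {n} (k l : idx n) : R := if Nat.eq_dec (proj1_sig k) (proj1_sig l) then 1 else 0.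

Lemma sumI_delta {n} (f : idx n -> R) (k : idx n) :
  sumI (fun l => if Nat.eq_dec (proj1_sig l) (proj1_sig k) then f l else 0) = f k.
Proof. unfold sumI. transitivity (sumN n (fun m => if Nat.eq_dec m (proj1_sig k) then f k else 0)).
 apply sumN_ext. intros m Hm. unfold coordN. destruct (lt_dec m n); [|lia]. simpl.
 destruct (Nat.eq_dec m (proj1_sig k)); auto. f_equal. apply idx_eq. auto.
 rewrite sumN_delta. destruct (lt_dec (proj1_sig k) n) as [|Hn]; auto. destruct k; simpl in *; lia.
Qed.

Lemma sumI_delta' {n} (f : idx n -> R) (k : idx n) :
  sumI (fun l => f l * delta k l) = f k.
Proof. rewrite <- (sumI_delta f k). apply sumI_ext. intros l. unfold delta.
 destruct (Nat.eq_dec (proj1_sig k) (proj1_sig l)); destruct (Nat.eq_dec (proj1_sig l) (proj1_sig k)); try lia; ring. Qed.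
Definition qf {n} (c x : Rn n) : R := sumI (fun k => (x k - c k) * (x k - c k)).

Lemma dist_qf {n} (y c : Rn n) : dist y c = sqrt (qf c y).
Proof. reflexivity. Qed.

Lemma qf_nonneg {n} (c x : Rn n) : 0 <= qf c x.
Proof. apply sumI_nonneg. intros. apply Rle_0_sqr. Qed.

Lemma qf_self {n} (c : Rn n) : qf c c = 0.
Proof. unfold qf. rewrite <- (@sumI_zero n). apply sumI_ext. intros; ring. Qed.

Lemma dist_self {n} (c : Rn n) : dist c c = 0.
Proof. rewrite dist_qf, qf_self. apply sqrt_0. Qed.

Lemma dist_nonneg {n} (y c : Rn n) : 0 <= dist y c.
Proof. rewrite dist_qf. apply sqrt_pos. Qed.

Lemma dist_sq {n} (y c : Rn n) : dist y c * dist y c = qf c y.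
Proof. rewrite dist_qf. apply sqrt_sqrt. apply qf_nonneg. Qed.

Lemma qf_shift {n} (c x : Rn n) (k : idx n) (t : R) :
  qf c (shift x k t) = qf c x + 2 * t * (x k - c k) + t * t.
Proof. unfold qf, shift.
 transitivity (sumI (fun j => (x j - c j) * (x j - c j) +
    (if Nat.eq_dec (proj1_sig j) (proj1_sig k) then (fun j => 2 * t * (x j - c j) + t * t) j else 0))).
 - apply sumI_ext. intros j. destruct (Nat.eq_dec (proj1_sig j) (proj1_sig k)); ring.
 - rewrite sumI_plus, sumI_delta. ring.
Qed.

Lemma coord_le_dist {n} (y x : Rn n) k : Rabs (y k - x k) <= dist y x.
Proof. rewrite dist_qf. rewrite <- sqrt_Rsqr_abs. apply sqrt_le_1_alt. unfold Rsqr, qf.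
 apply (sumI_term_le (fun k => (y k - x k) * (y k - x k))). intros; apply Rle_0_sqr. Qed.

Definition ctsA {n} (f : Rn n -> R) : Prop :=
  forall x eps, 0 < eps -> exists d, 0 < d /\ forall y, dist y x < d -> Rabs (f y - f x) < eps.

Lemma ctsA_cont_on {n} (S : Rn n -> Prop) f : ctsA f -> cont_on S f.
Proof. intros H x _ eps He. destruct (H x eps He) as [d [Hd H']]. exists d; split; auto. Qed.

Lemma ctsA_const {n} c : @ctsA n (fun _ => c).
Proof. intros x eps He. exists 1; split; [lra|]. intros. unfold Rminus. rewrite Rplus_opp_r, Rabs_R0. auto. Qed.

Lemma ctsA_coord {n} (k : idx n) : ctsA (fun y => y k).
Proof. intros x eps He. exists eps; split; auto. intros. eapply Rle_lt_trans; [apply coord_le_dist|]; auto. Qed.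

Lemma ctsA_plus {n} (f g : Rn n -> R) : ctsA f -> ctsA g -> ctsA (fun y => f y + g y).
Proof. intros Hf Hg x eps He. destruct (Hf x (eps/2)) as [d1 [H1 H1']]; [lra|].
 destruct (Hg x (eps/2)) as [d2 [H2 H2']]; [lra|]. exists (Rmin d1 d2); split. apply Rmin_glb_lt; auto.
 intros y Hy. assert (A := H1' y (Rlt_le_trans _ _ _ Hy (Rmin_l _ _))).
 assert (B := H2' y (Rlt_le_trans _ _ _ Hy (Rmin_r _ _))).
 replace (f y + g y - (f x + g x)) with ((f y - f x) + (g y - g x)) by ring.
 eapply Rle_lt_trans; [apply Rabs_triang|]. lra. Qed.

Lemma ctsA_mult {n} (f g : Rn n -> R) : ctsA f -> ctsA g -> ctsA (fun y => f y * g y).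
Proof. intros Hf Hg x eps He.
 set (A := Rabs (f x) + 1). set (B := Rabs (g x) + 1).
 assert (HA : 0 < A) by (unfold A; generalize (Rabs_pos (f x)); lra).
 assert (HB : 0 < B) by (unfold B; generalize (Rabs_pos (g x)); lra).
 destruct (Hf x (Rmin 1 (eps / (2 * B)))) as [d1 [H1 H1']].
 { apply Rmin_glb_lt; [lra|]. apply Rdiv_lt_0_compat; lra. }
 destruct (Hg x (eps / (2 * A))) as [d2 [H2 H2']]. { apply Rdiv_lt_0_compat; lra. }
 exists (Rmin d1 d2); split. apply Rmin_glb_lt; auto.
 intros y Hy. assert (F := H1' y (Rlt_le_trans _ _ _ Hy (Rmin_l _ _))).
 assert (G := H2' y (Rlt_le_trans _ _ _ Hy (Rmin_r _ _))).
 assert (F1 : Rabs (f y - f x) < 1) by (eapply Rlt_le_trans; [apply F|apply Rmin_l]).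
 assert (F2 : Rabs (f y - f x) < eps / (2 * B)) by (eapply Rlt_le_trans; [apply F|apply Rmin_r]).
 assert (Hfy : Rabs (f y) <= A).
 { unfold A. replace (f y) with ((f y - f x) + f x) by ring. eapply Rle_trans; [apply Rabs_triang|]. lra. }
 replace (f y * g y - f x * g x) with (f y * (g y - g x) + g x * (f y - f x)) by ring.
 eapply Rle_lt_trans; [apply Rabs_triang|]. rewrite !Rabs_mult.
 assert (HgB : Rabs (g x) <= B) by (unfold B; lra).
 assert (P1 : Rabs (f y) * Rabs (g y - g x) < eps / 2).
 { apply Rle_lt_trans with (A * Rabs (g y - g x)). apply Rmult_le_compat_r; [apply Rabs_pos|lra].
   replace (eps / 2) with (A * (eps / (2 * A))) by (field; lra). apply Rmult_lt_compat_l; auto. }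
 assert (P2 : Rabs (g x) * Rabs (f y - f x) <= eps / 2).
 { replace (eps / 2) with (B * (eps / (2 * B))) by (field; lra).
   apply Rmult_le_compat; try apply Rabs_pos; lra. }
 lra.
Qed.

Lemma ctsA_comp {n} (g : R -> R) (f : Rn n -> R) :
  ctsA f -> (forall x, continuity_pt g (f x)) -> ctsA (fun y => g (f y)).
Proof. intros Hf Hg x eps He. destruct (Hg x eps He) as [a [Ha Ha']].
 destruct (Hf x a Ha) as [d [Hd Hd']]. exists d; split; auto. intros y Hy.
 destruct (Req_dec (f y) (f x)) as [E|E]. rewrite E. unfold Rminus. rewrite Rplus_opp_r, Rabs_R0; auto.
 apply (Ha' (f y)). split. split; [exact I|auto]. apply Hd'; auto. Qed.

Lemma ctsA_sumI {n} (F : idx n -> Rn n -> R) : (forall k, ctsA (F k)) -> ctsA (fun y => sumI (fun k => F k y)).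
Proof. intros H. unfold sumI. assert (G : forall m, ctsA (fun y => sumN m (coordN (fun k => F k y)))).
 2: apply G. intros m. induction m; simpl.
 - apply ctsA_const.
 - apply ctsA_plus; auto. unfold coordN. destruct (lt_dec m n). apply H. apply ctsA_const. Qed.

Lemma ctsA_qf {n} (c : Rn n) : ctsA (qf c).
Proof. unfold qf. apply (ctsA_sumI (fun k y => (y k - c k) * (y k - c k))). intros k.
 apply ctsA_mult; apply ctsA_plus; try apply ctsA_coord; apply ctsA_const. Qed.

Lemma ctsA_dist {n} (c : Rn n) : ctsA (fun y => dist y c).
Proof. apply (ctsA_comp sqrt (qf c)). apply ctsA_qf. intros; apply continuity_pt_sqrt, qf_nonneg. Qed.
Definition incr (phi : nat -> nat) := forall j, (phi j < phi (S j))%nat.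

Lemma incr_ge phi : incr phi -> forall j, (j <= phi j)%nat.
Proof. intros H j. induction j. lia. specialize (H j). lia. Qed.

Lemma incr_mono phi : incr phi -> forall a b, (a < b)%nat -> (phi a < phi b)%nat.
Proof. intros H a b Hab. induction b. lia. destruct (Nat.eq_dec a b). subst. apply H.
 specialize (H b). assert (phi a < phi b)%nat by (apply IHb; lia). lia. Qed.

Lemma incr_comp phi psi : incr phi -> incr psi -> incr (fun j => phi (psi j)).
Proof. intros H1 H2 j. apply incr_mono; auto. Qed.

Lemma Un_cv_subseq u l phi : Un_cv u l -> incr phi -> Un_cv (fun j => u (phi j)) l.
Proof. intros H Hp eps He. destruct (H eps He) as [N HN]. exists N. intros j Hj.
 apply HN. generalize (incr_ge phi Hp j). lia. Qed.

Lemma inv_INR_small eps : 0 < eps -> exists N, forall j, (N <= j)%nat -> / (INR j + 1) < eps.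
Proof. intros He. destruct (archimed_cor1 eps He) as [N [H1 H2]]. exists N. intros j Hj.
 apply Rle_lt_trans with (/ INR N); auto. apply Rinv_le_contravar. apply lt_0_INR; auto.
 apply le_INR in Hj. lra. Qed.

Lemma ValAdh_subseq u l : ValAdh u l -> exists psi, incr psi /\ Un_cv (fun j => u (psi j)) l.
Proof. intros H.
 assert (Hp : forall N j, exists p, (N <= p)%nat /\ Rabs (u p - l) < / (INR j + 1)).
 { intros N j. assert (Hpos : 0 < / (INR j + 1)). { apply Rinv_0_lt_compat. generalize (pos_INR j); lra. }
   destruct (H (disc l (mkposreal _ Hpos)) N) as [p Hp]. exists (mkposreal _ Hpos). intros y Hy; auto.
   exists p; auto. }
 set (pick := fun N j => proj1_sig (constructive_indefinite_description _ (Hp N j))).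
 assert (Hpick : forall N j, (N <= pick N j)%nat /\ Rabs (u (pick N j) - l) < / (INR j + 1)).
 { intros; unfold pick; destruct (constructive_indefinite_description _ (Hp N j)); auto. }
 set (psi := fix psi (j:nat) : nat := match j with O => pick O O | S j' => pick (S (psi j')) (S j') end).
 exists psi. split.
 - intros j. simpl. destruct (Hpick (S (psi j)) (S j)). lia.
 - intros eps He. destruct (inv_INR_small eps He) as [N HN]. exists N. intros j Hj.
   unfold R_dist. assert (Rabs (u (psi j) - l) < / (INR j + 1)).
   { destruct j; simpl; apply Hpick. }
   specialize (HN j Hj). lra.
Qed.

Lemma extract {n} (xs : nat -> Rn n) (c : Rn n) (R : R) :
  (forall j k, Rabs (xs j k - c k) <= R) ->
  exists phi, incr phi /\ exists lim : Rn n, forall k, Un_cv (fun j => xs (phi j) k) (lim k).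
Proof. intros Hb.
 assert (G : forall m, exists phi, incr phi /\ exists lim : Rn n,
   forall k, (proj1_sig k < m)%nat -> Un_cv (fun j => xs (phi j) k) (lim k)).
 { intros m. induction m.
   - exists (fun j => j). split. intros j; lia. exists c. intros k Hk; lia.
   - destruct IHm as [phi [Hphi [lim Hlim]]]. destruct (lt_dec m n) as [Hm|Hm].
     + set (km := exist (fun k => (k < n)%nat) m Hm : idx n).
       destruct (Bolzano_Weierstrass (fun j => xs (phi j) km) (fun y => c km - R <= y <= c km + R)) as [l Hl].
       { apply compact_P3. }
       { intros j. specialize (Hb (phi j) km).
         unfold Rabs in Hb. destruct (Rcase_abs (xs (phi j) km - c km)); lra. }
       destruct (ValAdh_subseq _ _ Hl) as [psi [Hpsi Hcv]].
       exists (fun j => phi (psi j)). split. apply incr_comp; auto.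
       exists (fun k => if Nat.eq_dec (proj1_sig k) m then l else lim k). intros k Hk.
       destruct (Nat.eq_dec (proj1_sig k) m).
       * replace k with km. exact Hcv. apply idx_eq. simpl. auto.
       * apply (Un_cv_subseq (fun j => xs (phi j) k)). apply Hlim. lia. auto.
     + exists phi. split; auto. exists lim. intros k Hk. apply Hlim. destruct k; simpl in *; lia. }
 destruct (G n) as [phi [Hphi [lim Hlim]]]. exists phi; split; auto. exists lim.
 intros k. apply Hlim. destruct k; simpl; auto.
Qed.
Lemma cv_unif {n} (y : nat -> Rn n) (l : Rn n) :
  (forall k, Un_cv (fun j => y j k) (l k)) ->
  forall e, 0 < e -> exists N, forall j, (N <= j)%nat -> forall k, Rabs (y j k - l k) < e.
Proof. intros H e He.
 assert (G : forall m, exists N, forall j, (N <= j)%nat -> forall k, (proj1_sig k < m)%nat -> Rabs (y j k - l k) < e).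
 { intros m; induction m.
   - exists O. intros; lia.
   - destruct IHm as [N HN]. destruct (lt_dec m n) as [Hm|Hm].
     + set (km := exist (fun k => (k < n)%nat) m Hm : idx n).
       destruct (H km e He) as [N2 HN2]. exists (max N N2). intros j Hj k Hk.
       destruct (Nat.eq_dec (proj1_sig k) m).
       * replace k with km by (apply idx_eq; simpl; auto). apply HN2. lia.
       * apply HN. lia. lia.
     + exists N. intros j Hj k Hk. apply HN; auto. destruct k; simpl in *; lia. }
 destruct (G n) as [N HN]. exists N. intros j Hj k. apply HN; auto. destruct k; simpl; auto.
Qed.

Lemma cv_dist {n} (y : nat -> Rn n) (l : Rn n) :
  (forall k, Un_cv (fun j => y j k) (l k)) ->
  forall eps, 0 < eps -> exists N, forall j, (N <= j)%nat -> dist (y j) l < eps.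
Proof. intros H eps He. set (e := eps / (INR n + 1)).
 assert (Hn : 0 <= INR n) by apply pos_INR.
 assert (He' : 0 < e) by (unfold e; apply Rdiv_lt_0_compat; lra).
 destruct (cv_unif y l H e He') as [N HN]. exists N. intros j Hj.
 rewrite dist_qf. rewrite <- (sqrt_square eps) by lra. apply sqrt_lt_1_alt. split. apply qf_nonneg.
 apply Rle_lt_trans with (@sumI n (fun _ => e * e)).
 - apply sumI_le. intros k. specialize (HN j Hj k). unfold Rabs in HN.
   destruct (Rcase_abs (y j k - l k)); nra.
 - rewrite sumI_const. unfold e. 
   assert (INR n * (eps / (INR n + 1) * (eps / (INR n + 1))) = eps * eps * (INR n / ((INR n + 1) * (INR n + 1)))) by (field; lra).
   rewrite H0. assert (INR n / ((INR n + 1) * (INR n + 1)) < 1).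
   { apply Rmult_lt_reg_r with ((INR n + 1) * (INR n + 1)). nra. unfold Rdiv. rewrite Rmult_assoc, Rinv_l. nra. nra. }
   assert (0 < eps * eps) by nra. nra.
Qed.

Lemma cball_max {n} (x0 : Rn n) (rad : R) (F : Rn n -> R) :
  0 <= rad -> cont_on (cball x0 rad) F -> (exists B, forall y, cball x0 rad y -> F y <= B) ->
  exists z, cball x0 rad z /\ forall y, cball x0 rad y -> F y <= F z.
Proof. intros HR HF [B HB].
 set (E := fun s => exists y, cball x0 rad y /\ s = F y).
 assert (Hx0 : cball x0 rad x0) by (unfold cball; rewrite dist_self; auto).
 destruct (completeness E) as [s [Hs1 Hs2]].
 { exists B. intros x [y [Hy ->]]. auto. }
 { exists (F x0). exists x0; auto. }
 assert (Hseq : forall j, exists y, cball x0 rad y /\ s - / (INR j + 1) < F y).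
 { intros j. destruct (classic (exists y, cball x0 rad y /\ s - / (INR j + 1) < F y)) as [|Hno]; auto.
   exfalso. assert (s <= s - / (INR j + 1)).
   { apply Hs2. intros x [y [Hy ->]]. apply Rnot_lt_le. intro. apply Hno. exists y; auto. }
   assert (0 < / (INR j + 1)) by (apply Rinv_0_lt_compat; generalize (pos_INR j); lra). lra. }
 set (xs := fun j => proj1_sig (constructive_indefinite_description _ (Hseq j))).
 assert (Hxs : forall j, cball x0 rad (xs j) /\ s - / (INR j + 1) < F (xs j)).
 { intros; unfold xs; destruct (constructive_indefinite_description _ (Hseq j)); auto. }
 destruct (extract xs x0 rad) as [phi [Hphi [z Hz]]].
 { intros j k. eapply Rle_trans. apply coord_le_dist. apply Hxs. }
 assert (Hd := cv_dist (fun j => xs (phi j)) z Hz).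
 assert (Hzc : cball x0 rad z).
 { unfold cball. apply Rnot_lt_le. intro Hlt.
   destruct (ctsA_dist x0 z (dist z x0 - rad)) as [d [Hd0 Hd1]]. lra.
   destruct (Hd d Hd0) as [N HN]. specialize (HN N (le_n _)). specialize (Hd1 _ HN).
   destruct (Hxs (phi N)) as [Hc _]. unfold cball in Hc. unfold Rabs in Hd1.
   destruct (Rcase_abs (dist (xs (phi N)) x0 - dist z x0)); lra. }
 exists z. split; auto.
 assert (Hsz : s <= F z).
 { apply Rnot_lt_le. intro Hlt. destruct (HF z Hzc ((s - F z)/2)) as [d [Hd0 Hd1]]. lra.
   destruct (Hd d Hd0) as [N1 HN1]. destruct (inv_INR_small ((s - F z)/2)) as [N2 HN2]. lra.
   set (j := max N1 N2).
   specialize (HN1 j ltac:(unfold j; lia)). assert (Hj2 := HN2 (phi j) ltac:(generalize (incr_ge phi Hphi j); unfold j; lia)).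
   destruct (Hxs (phi j)) as [Hc Hv]. specialize (Hd1 _ Hc HN1). unfold Rabs in Hd1.
   destruct (Rcase_abs (F (xs (phi j)) - F z)); lra. }
 intros y Hy. apply Rle_trans with s; auto. apply Hs1. exists y; auto.
Qed.
Lemma dpl_mult f g x a b : derivable_pt_lim f x a -> derivable_pt_lim g x b ->
  derivable_pt_lim (fun t => f t * g t) x (a * g x + f x * b).
Proof. intros. exact (derivable_pt_lim_mult f g x a b H H0). Qed.

Lemma dpl_mult' f g x a b L : derivable_pt_lim f x a -> derivable_pt_lim g x b ->
  L = a * g x + f x * b -> derivable_pt_lim (fun t => f t * g t) x L.
Proof. intros. subst. apply dpl_mult; auto. Qed.

Lemma dpl_comp f h x a b : derivable_pt_lim f x a -> derivable_pt_lim h (f x) b ->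
  derivable_pt_lim (fun t => h (f t)) x (b * a).
Proof. intros. exact (derivable_pt_lim_comp f h x a b H H0). Qed.

Lemma dpl_quad A B C : derivable_pt_lim (fun t => A + B * t + C * (t * t)) 0 B.
Proof. apply is_derive_Reals. auto_derive; auto. ring. Qed.

Lemma dpl_lin A B : derivable_pt_lim (fun t => A + B * t) 0 B.
Proof. apply is_derive_Reals. auto_derive; auto. ring. Qed.

Lemma dpl_ext f g x l : (forall t, f t = g t) -> derivable_pt_lim g x l -> derivable_pt_lim f x l.
Proof. intros H. replace f with g; auto. apply functional_extensionality; auto. Qed.

Lemma cont_of_der h h1 : (forall t, derivable_pt_lim h t (h1 t)) -> forall t, continuity_pt h t.
Proof. intros H t. apply derivable_continuous_pt. exists (h1 t). apply H. Qed.

Section TF.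
Context {n : nat} (c : Rn n) (h h1 h2 : R -> R).
Definition tphi (x : Rn n) := h (qf c x).
Definition tD (k : idx n) (x : Rn n) := 2 * h1 (qf c x) * (x k - c k).
Definition tD2 (k l : idx n) (x : Rn n) :=
  4 * h2 (qf c x) * (x k - c k) * (x l - c l) + 2 * h1 (qf c x) * delta k l.

Hypothesis Hh : forall t, derivable_pt_lim h t (h1 t).
Hypothesis Hh1 : forall t, derivable_pt_lim h1 t (h2 t).
Hypothesis Hh2 : forall t, continuity_pt h2 t.

Lemma test_C2 (Om : Rn n -> Prop) : C2_with Om tphi tD tD2.
Proof. unfold C2_with. split; [|split].
 - apply ctsA_cont_on. unfold tphi. apply ctsA_comp. apply ctsA_qf. intros; eapply cont_of_der; eauto.
 - intros k. split.
   + intros x _. unfold tphi, tD.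
     apply dpl_ext with (g := fun t => h (qf c x + 2 * (x k - c k) * t + 1 * (t * t))).
     { intros t. rewrite qf_shift. f_equal. ring. }
     replace (2 * h1 (qf c x) * (x k - c k)) with (h1 (qf c x + 2 * (x k - c k) * 0 + 1 * (0 * 0)) * (2 * (x k - c k))).
     2: { replace (qf c x + 2 * (x k - c k) * 0 + 1 * (0 * 0)) with (qf c x) by ring. ring. }
     apply dpl_comp. apply dpl_quad. apply Hh.
   + apply ctsA_cont_on. unfold tD. apply ctsA_mult. apply ctsA_mult. apply ctsA_const.
     apply ctsA_comp. apply ctsA_qf. intros; eapply cont_of_der; eauto.
     apply ctsA_plus. apply ctsA_coord. apply ctsA_const.
 - intros k l. split.
   + intros x _. unfold tD, tD2.
     apply dpl_ext with (g := fun t => (2 * h1 (qf c x + 2 * (x l - c l) * t + 1 * (t * t))) * ((x k - c k) + delta k l * t)).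
     { intros t. rewrite qf_shift.
       replace (qf c x + 2 * t * (x l - c l) + t * t) with (qf c x + 2 * (x l - c l) * t + 1 * (t * t)) by ring.
       unfold shift, delta.
       destruct (Nat.eq_dec (proj1_sig k) (proj1_sig l)); ring. }
     set (Q := qf c x + 2 * (x l - c l) * 0 + 1 * (0 * 0)).
     assert (HQ : Q = qf c x) by (unfold Q; ring).
     apply (dpl_mult' (fun t => 2 * h1 (qf c x + 2 * (x l - c l) * t + 1 * (t * t)))
              (fun t => (x k - c k) + delta k l * t) 0 (2 * (h2 Q * (2 * (x l - c l)))) (delta k l)).
     * apply (dpl_mult' (fun _ => 2) (fun t => h1 (qf c x + 2 * (x l - c l) * t + 1 * (t * t))) 0 0 (h2 Q * (2 * (x l - c l)))).
       apply derivable_pt_lim_const. apply dpl_comp. apply dpl_quad. apply Hh1. ring.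
     * apply dpl_lin.
     * fold Q. rewrite HQ. ring.
   + apply ctsA_cont_on. unfold tD2. apply ctsA_plus.
     * apply ctsA_mult. apply ctsA_mult. apply ctsA_mult. apply ctsA_const.
       apply ctsA_comp. apply ctsA_qf. auto.
       apply ctsA_plus. apply ctsA_coord. apply ctsA_const.
       apply ctsA_plus. apply ctsA_coord. apply ctsA_const.
     * apply ctsA_mult. apply ctsA_mult. apply ctsA_const.
       apply ctsA_comp. apply ctsA_qf. intros; eapply cont_of_der; eauto. apply ctsA_const.
Qed.
End TF.
Section Hess.
Context {n : nat} (c : Rn n) (h h1 h2 : R -> R).

Lemma grad_sq_t x : grad_sq (tD c h1) x = 4 * (h1 (qf c x) * h1 (qf c x)) * qf c x.
Proof. unfold grad_sq, tD. transitivity (sumI (fun k => (4 * (h1 (qf c x) * h1 (qf c x))) * ((x k - c k) * (x k - c k)))).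
 apply sumI_ext. intros; simpl; ring. rewrite sumI_scal. reflexivity. Qed.

Lemma dsum_t x : sumI (fun k => sumI (fun l => tD c h1 k x * tD c h1 l x * tD2 c h1 h2 k l x)) =
  16 * (h1 (qf c x) * h1 (qf c x)) * h2 (qf c x) * (qf c x * qf c x) + 8 * (h1 (qf c x) * h1 (qf c x) * h1 (qf c x)) * qf c x.
Proof. set (q := qf c x). set (a := h1 q). set (b := h2 q).
 transitivity (sumI (fun k => (16 * (a*a) * b * q + 8 * (a*a*a)) * ((x k - c k) * (x k - c k)))).
 - apply sumI_ext. intros k. unfold tD, tD2. fold q. fold a. fold b.
   transitivity (sumI (fun l => (16 * (a*a) * b * ((x k - c k) * (x k - c k))) * ((x l - c l) * (x l - c l)) +
       (8 * (a*a*a) * (x k - c k)) * ((x l - c l) * delta k l))).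
   + apply sumI_ext. intros l. ring.
   + rewrite sumI_plus, !sumI_scal, (sumI_delta' (fun l => x l - c l)). fold (qf c x). fold q. ring.
 - rewrite sumI_scal. fold (qf c x). fold q. ring.
Qed.

Lemma inf_lap_t x : grad_sq (tD c h1) x <> 0 ->
  inf_lap (tD c h1) (tD2 c h1 h2) x = 4 * h2 (qf c x) * qf c x + 2 * h1 (qf c x).
Proof. intros H. unfold inf_lap. rewrite dsum_t. rewrite grad_sq_t in *. field. split; intro E; apply H; rewrite E; ring. Qed.

Lemma hess_t x v : hess_quad (tD2 c h1 h2) x v =
  4 * h2 (qf c x) * (sumI (fun k => (x k - c k) * v k) * sumI (fun k => (x k - c k) * v k))
  + 2 * h1 (qf c x) * sumI (fun k => v k * v k).
Proof. unfold hess_quad. set (q := qf c x). set (a := h1 q). set (b := h2 q).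
 set (S := sumI (fun k => (x k - c k) * v k)).
 transitivity (sumI (fun k => (4 * b * S) * ((x k - c k) * v k) + (2 * a) * (v k * v k))).
 - apply sumI_ext. intros k. unfold tD2. fold q a b.
   transitivity (sumI (fun l => (4 * b * (x k - c k) * v k) * ((x l - c l) * v l) + (2 * a * v k) * (v l * delta k l))).
   + apply sumI_ext. intros l. ring.
   + rewrite sumI_plus, !sumI_scal, (sumI_delta' v). fold S. ring.
 - rewrite sumI_plus, !sumI_scal. fold S. ring.
Qed.
End Hess.
Lemma dpl_plus f g x a b : derivable_pt_lim f x a -> derivable_pt_lim g x b ->
  derivable_pt_lim (fun t => f t + g t) x (a + b).
Proof. intros. exact (derivable_pt_lim_plus f g x a b H H0). Qed.

Lemma dpl_aff f t l A a M : derivable_pt_lim f t l ->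
  derivable_pt_lim (fun s => A + a * f s - M * s) t (a * l - M).
Proof. intros H. replace (a * l - M) with ((0 + a * l) + (-M * 1)) by ring.
 apply dpl_ext with (g := fun s => (A + a * f s) + (- M) * s). intros; ring.
 apply dpl_plus. apply dpl_plus. apply derivable_pt_lim_const.
 exact (derivable_pt_lim_scal f a t l H).
 exact (derivable_pt_lim_scal id (-M) t 1 (derivable_pt_lim_id t)).
Qed.

Lemma dpl_aff0 f t l a M : derivable_pt_lim f t l ->
  derivable_pt_lim (fun s => a * f s - M) t (a * l).
Proof. intros H. replace (a * l) with (a * l + 0) by ring.
 apply dpl_ext with (g := fun s => a * f s + (- M)). intros; ring.
 apply dpl_plus. exact (derivable_pt_lim_scal f a t l H). apply derivable_pt_lim_const. Qed.

Lemma dpl_local f g x l : (exists d, 0 < d /\ forall s, Rabs (s - x) < d -> f s = g s) ->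
  derivable_pt_lim g x l -> derivable_pt_lim f x l.
Proof. intros [d [Hd Hfg]] H eps He. destruct (H eps He) as [del Hdel].
 assert (Hm : 0 < Rmin d del) by (apply Rmin_pos; auto; apply cond_pos).
 exists (mkposreal _ Hm). intros hh Hh Hhh. simpl in Hhh.
 rewrite !Hfg. apply Hdel; auto. eapply Rlt_le_trans; [apply Hhh|apply Rmin_r].
 unfold Rminus; rewrite Rplus_opp_r, Rabs_R0; auto.
 replace (x + hh - x) with hh by ring. eapply Rlt_le_trans; [apply Hhh|apply Rmin_l].
Qed.

Lemma glue_der (g p g' p' : R -> R) t1 :
  (forall t, t1 <= t -> derivable_pt_lim g t (g' t)) ->
  (forall t, t <= t1 -> derivable_pt_lim p t (p' t)) ->
  g t1 = p t1 -> g' t1 = p' t1 ->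
  forall t, derivable_pt_lim (fun s => if Rle_dec t1 s then g s else p s) t
              (if Rle_dec t1 t then g' t else p' t).
Proof. intros Hg Hp E E' t.
 destruct (Rtotal_order t t1) as [Hlt|[Heq|Hgt]].
 - destruct (Rle_dec t1 t); [lra|]. apply dpl_local with p. exists (t1 - t). split; [lra|].
   intros s Hs. destruct (Rle_dec t1 s); auto. unfold Rabs in Hs; destruct (Rcase_abs (s - t)); lra.
   apply Hp; lra.
 - subst t. destruct (Rle_dec t1 t1); [|lra]. intros eps He.
   destruct (Hg t1 (Rle_refl _) eps He) as [d1 H1]. destruct (Hp t1 (Rle_refl _) eps He) as [d2 H2].
   assert (Hm : 0 < Rmin d1 d2) by (apply Rmin_pos; apply cond_pos).
   exists (mkposreal _ Hm). intros hh Hh Hhh. simpl in Hhh. cbv beta.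
   destruct (Rle_dec t1 t1) as [_|]; [|lra].
   destruct (Rle_dec t1 (t1 + hh)).
   + apply H1; auto. eapply Rlt_le_trans; [apply Hhh|apply Rmin_l].
   + rewrite E, E'. apply H2; auto. eapply Rlt_le_trans; [apply Hhh|apply Rmin_r].
 - destruct (Rle_dec t1 t); [|lra]. apply dpl_local with g. exists (t - t1). split; [lra|].
   intros s Hs. destruct (Rle_dec t1 s); auto. unfold Rabs in Hs; destruct (Rcase_abs (s - t)); lra.
   apply Hg; lra.
Qed.

Lemma glue_cont (g p : R -> R) t1 :
  (forall t, t1 <= t -> continuity_pt g t) -> (forall t, t <= t1 -> continuity_pt p t) ->
  g t1 = p t1 -> forall t, continuity_pt (fun s => if Rle_dec t1 s then g s else p s) t.
Proof. intros Hg Hp E t. unfold continuity_pt, continue_in, limit1_in, limit_in in *. simpl in *.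
 intros eps He.
 destruct (Rtotal_order t t1) as [Hlt|[Heq|Hgt]].
 - destruct (Hp t (Rlt_le _ _ Hlt) eps He) as [a [Ha Ha']]. exists (Rmin a (t1 - t)). split.
   apply Rmin_pos; lra. intros x [Hx Hd]. destruct (Rle_dec t1 t); [lra|]. destruct (Rle_dec t1 x).
   exfalso. unfold R_dist, Rabs in Hd. assert (Hd' := Rmin_r a (t1 - t)). destruct (Rcase_abs (x - t)); lra.
   apply Ha'. split; auto. eapply Rlt_le_trans; [apply Hd|apply Rmin_l].
 - subst t. destruct (Hp t1 (Rle_refl _) eps He) as [a1 [Ha1 Ha1']].
   destruct (Hg t1 (Rle_refl _) eps He) as [a2 [Ha2 Ha2']].
   exists (Rmin a1 a2). split. apply Rmin_pos; lra. intros x [Hx Hd].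
   destruct (Rle_dec t1 t1); [|lra]. destruct (Rle_dec t1 x).
   + apply Ha2'. split; auto. eapply Rlt_le_trans; [apply Hd|apply Rmin_r].
   + rewrite E. apply Ha1'. split; auto. eapply Rlt_le_trans; [apply Hd|apply Rmin_l].
 - destruct (Hg t (Rlt_le _ _ Hgt) eps He) as [a [Ha Ha']]. exists (Rmin a (t - t1)). split.
   apply Rmin_pos; lra. intros x [Hx Hd]. destruct (Rle_dec t1 t); [|lra]. destruct (Rle_dec t1 x).
   apply Ha'. split; auto. eapply Rlt_le_trans; [apply Hd|apply Rmin_l].
   exfalso. unfold R_dist, Rabs in Hd. assert (Hd' := Rmin_r a (t - t1)). destruct (Rcase_abs (x - t)); lra.
Qed.
Section Sig.
Variable t1 : R.
Hypothesis Ht1 : 0 < t1.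
Let s1 := sqrt t1.
Lemma s1_pos : 0 < s1. Proof. apply sqrt_lt_R0; auto. Qed.

Definition sgP t := s1 + (t - t1) / (2 * s1) - (t - t1) * (t - t1) / (8 * s1 ^ 3).
Definition sgP1 t := / (2 * s1) - (t - t1) / (4 * s1 ^ 3).
Definition sgP2 (t : R) := - / (4 * s1 ^ 3).
Definition sgG1 t := / (2 * sqrt t).
Definition sgG2 t := - / (4 * sqrt t ^ 3).

Definition sg t := if Rle_dec t1 t then sqrt t else sgP t.
Definition sg1 t := if Rle_dec t1 t then sgG1 t else sgP1 t.
Definition sg2 t := if Rle_dec t1 t then sgG2 t else sgP2 t.

Lemma sg_der t : derivable_pt_lim sg t (sg1 t).
Proof. apply glue_der.
 - intros; apply derivable_pt_lim_sqrt; lra.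
 - intros. unfold sgP, sgP1. assert (H0 := s1_pos). apply is_derive_Reals. auto_derive. auto. field. lra.
 - unfold sgP. fold s1. field. generalize s1_pos; lra.
 - unfold sgG1, sgP1. fold s1. field. generalize s1_pos; lra.
Qed.

Lemma sg1_der t : derivable_pt_lim sg1 t (sg2 t).
Proof. apply glue_der.
 - intros t0 H. assert (0 < sqrt t0) by (apply sqrt_lt_R0; lra). unfold sgG1, sgG2. apply is_derive_Reals.
   auto_derive. repeat split; lra. field. lra.
 - intros. unfold sgP1, sgP2. assert (H1 := s1_pos). apply is_derive_Reals. auto_derive. auto. field. lra.
 - unfold sgG1, sgP1. fold s1. field. generalize s1_pos; lra.
 - unfold sgG2, sgP2. fold s1. reflexivity.
Qed.

Lemma sg2_cont t : continuity_pt sg2 t.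
Proof. apply glue_cont.
 - intros t0 H. assert (0 < sqrt t0) by (apply sqrt_lt_R0; lra). apply continuity_pt_filterlim.
   change (continuous sgG2 t0). apply (ex_derive_continuous (V := R_CompleteNormedModule)). unfold sgG2. auto_derive. repeat split; try lra.
   apply Rgt_not_eq. repeat apply Rmult_lt_0_compat; lra.
 - intros. unfold sgP2. apply continuity_pt_const. intros a b; auto.
 - unfold sgG2, sgP2. fold s1. reflexivity.
Qed.

Lemma sg_eq t : t1 <= t -> sg t = sqrt t.
Proof. intros; unfold sg; destruct (Rle_dec t1 t); [auto|lra]. Qed.
Lemma sg1_eq t : t1 <= t -> sg1 t = / (2 * sqrt t).
Proof. intros; unfold sg1; destruct (Rle_dec t1 t); [auto|lra]. Qed.
Lemma sg2_eq t : t1 <= t -> sg2 t = - / (4 * sqrt t ^ 3).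
Proof. intros; unfold sg2; destruct (Rle_dec t1 t); [auto|lra]. Qed.
End Sig.
Lemma cont_on_sub {n} (A B : Rn n -> Prop) f : cont_on A f -> (forall y, B y -> A y) -> cont_on B f.
Proof. intros H Hs x Hx eps He. destruct (H x (Hs x Hx) eps He) as [d [Hd H']]. exists d; split; auto. Qed.

Lemma cont_on_minus {n} (S : Rn n -> Prop) f g : cont_on S f -> ctsA g -> cont_on S (fun y => f y - g y).
Proof. intros Hf Hg x Hx eps He. destruct (Hf x Hx (eps/2)) as [d1 [H1 H1']]. lra.
 destruct (Hg x (eps/2)) as [d2 [H2 H2']]. lra. exists (Rmin d1 d2). split. apply Rmin_pos; auto.
 intros y Hy Hd. assert (A := H1' y Hy (Rlt_le_trans _ _ _ Hd (Rmin_l _ _))).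
 assert (B := H2' y (Rlt_le_trans _ _ _ Hd (Rmin_r _ _))).
 replace (f y - g y - (f x - g x)) with ((f y - f x) - (g y - g x)) by ring.
 eapply Rle_lt_trans. apply Rabs_triang. rewrite Rabs_Ropp. lra. Qed.

Lemma in_closure {n} (U : Rn n -> Prop) y : U y -> closure U y.
Proof. intros H eps He. exists y. split; auto. rewrite dist_self; auto. Qed.

Lemma dist_zero_eq {n} (z x : Rn n) : dist z x = 0 -> z = x.
Proof. intros H. apply functional_extensionality. intros k. generalize (coord_le_dist z x k). rewrite H.
 intros. generalize (Rabs_pos (z k - x k)). intros. assert (Rabs (z k - x k) = 0) by lra.
 apply Rabs_eq_0 in H2. lra. Qed.

Lemma ctsA_minus {n} (f g : Rn n -> R) : ctsA f -> ctsA g -> ctsA (fun y => f y - g y).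
Proof. intros Hf Hg. apply (ctsA_plus f (fun y => - g y)); auto.
 intros x eps He. destruct (Hg x eps He) as [d [Hd H]]. exists d; split; auto. intros y Hy.
 specialize (H y Hy). replace (- g y - - g x) with (- (g y - g x)) by ring. rewrite Rabs_Ropp; auto. Qed.

Section Visc.
Context {n : nat} (Hn : (0 < n)%nat) (U : Rn n -> Prop) (u v : Rn n -> R) (x0 : Rn n) (R0 M : R).
Hypothesis HR0 : 0 < R0.
Hypothesis Hball : forall y, cball x0 R0 y -> U y.
Hypothesis Hcu : cont_on (closure U) u.
Hypothesis Hsub : sub_cond U u v.
Hypothesis HM : 0 < M.
Hypothesis HMb : forall y, cball x0 R0 y -> u y - v y >= - M.
Hypothesis Hub : forall y, cball x0 R0 y -> u y <= u x0 + 1.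

Lemma cball_le r y : r <= R0 -> cball x0 r y -> cball x0 R0 y.
Proof. unfold cball; intros; lra. Qed.

Lemma val_contra phi Dphi D2phi z val : C2_with U phi Dphi D2phi -> cball x0 R0 z ->
  local_max_at U (fun y => u y - phi y) z -> inf_lap_plus Dphi D2phi z val -> val < - M -> False.
Proof. intros HC Hz Hl Hv Hlt. specialize (Hsub phi Dphi D2phi z HC (Hball z Hz) Hl val Hv).
 specialize (HMb z Hz). lra. Qed.

Lemma cont_u r : r <= R0 -> cont_on (cball x0 r) u.
Proof. intros. apply cont_on_sub with (closure U); auto. intros y Hy. apply in_closure, Hball.
 eapply cball_le; eauto. Qed.

Lemma unit_exists : exists e : Rn n, unit_vec e.
Proof. set (k0 := exist (fun k => (k < n)%nat) 0%nat Hn : idx n).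
 exists (shift (fun _ => 0) k0 1). unfold unit_vec, norm.
 assert (E : dot (shift (fun _ => 0) k0 1) (shift (fun _ => 0) k0 1) = qf (fun _ => 0) (shift (fun _ => 0) k0 1)).
 { unfold dot, qf. apply sumI_ext. intros; ring. }
 rewrite E, qf_shift, qf_self. replace (0 + 2 * 1 * (0 - 0) + 1 * 1) with 1 by ring. apply sqrt_1. Qed.

Lemma unit_dot (w : Rn n) : unit_vec w -> sumI (fun k => w k * w k) = 1.
Proof. unfold unit_vec, norm, dot. intros H. rewrite <- (sqrt_sqrt (sumI (fun k => w k * w k))).
 rewrite H. ring. apply sumI_nonneg. intros; apply Rle_0_sqr. Qed.

Lemma claimB r T : 0 < r -> r <= R0 -> (forall y, sphere x0 r y -> u y <= T) -> u x0 <= T + M * (r * r).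
Proof. intros Hr HrR HT. apply Rnot_lt_le. intro Hlt.
 set (c := T + M * (r * r)).
 set (h := fun t => c - M * t). set (h1 := fun _ : R => - M). set (h2 := fun _ : R => 0).
 assert (Dh : forall t, derivable_pt_lim h t (h1 t)).
 { intros t. unfold h, h1. apply is_derive_Reals. auto_derive; auto. ring. }
 assert (Dh1 : forall t, derivable_pt_lim h1 t (h2 t)).
 { intros t. unfold h1, h2. apply derivable_pt_lim_const. }
 assert (Ch2 : forall t, continuity_pt h2 t).
 { intros t. unfold h2. apply continuity_pt_const. intros a b; auto. }
 set (F := fun y => u y - tphi x0 h y).
 destruct (cball_max x0 r F) as [z [Hz Hmax]]. lra.
 { unfold F. apply cont_on_minus. apply cont_u; auto. unfold tphi. apply ctsA_comp. apply ctsA_qf.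
   intros; apply cont_of_der with h1; auto. }
 { exists (u x0 + 1 - T). intros y Hy. unfold F, tphi, h. rewrite <- dist_sq.
   assert (u y <= u x0 + 1) by (apply Hub; eapply cball_le; eauto).
   unfold cball in Hy. assert (0 <= dist y x0) by apply dist_nonneg.
   assert (dist y x0 * dist y x0 <= r * r) by nra. unfold c. nra. }
 assert (HF0 : F x0 = u x0 - c). { unfold F, tphi, h. rewrite qf_self. ring. }
 assert (HFz : F x0 <= F z) by (apply Hmax; unfold cball; rewrite dist_self; lra).
 assert (Hdz : dist z x0 < r).
 { destruct (Rle_lt_or_eq_dec _ _ Hz) as [|E]; auto. exfalso.
   assert (u z <= T) by (apply HT; auto). rewrite HF0 in HFz. unfold F, tphi, h in HFz. rewrite <- (dist_sq z x0), E in HFz.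
   unfold c in *. lra. }
 apply (val_contra (tphi x0 h) (tD x0 h1) (tD2 x0 h1 h2) z (-2 * M)).
 - apply test_C2; auto.
 - eapply cball_le; eauto.
 - destruct (ctsA_dist x0 z (r - dist z x0)) as [d [Hd Hd']]. lra. exists d. split; auto.
   intros y _ Hy. specialize (Hd' y Hy). apply (Hmax y). unfold cball. unfold Rabs in Hd'.
   destruct (Rcase_abs (dist y x0 - dist z x0)); lra.
 - destruct (Req_dec (grad_sq (tD x0 h1) z) 0) as [E|E].
   + right. split; auto. split.
     * destruct unit_exists as [e He]. exists e. split; auto. rewrite hess_t, (unit_dot e He). unfold h1, h2. ring.
     * intros w Hw. rewrite hess_t, (unit_dot w Hw). unfold h1, h2. lra.
   + left. split; auto. rewrite inf_lap_t; auto. unfold h1, h2. ring.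
 - lra.
Qed.

Lemma claimA Rr a : 0 < Rr -> Rr <= R0 -> 2 * M * Rr <= a ->
  (forall y, sphere x0 Rr y -> u y <= u x0 + a * Rr - M * (Rr * Rr)) ->
  forall y, cball x0 Rr y -> u y <= u x0 + a * dist y x0 - M * (dist y x0 * dist y x0).
Proof. intros HR HRR Ha HT y0 Hy0. apply Rnot_lt_le. intro Hlt.
 set (C := fun y => u x0 + a * dist y x0 - M * (dist y x0 * dist y x0)).
 set (F := fun y => u y - C y).
 assert (HCc : ctsA C).
 { unfold C. apply ctsA_minus. apply ctsA_plus. apply ctsA_const. apply ctsA_mult. apply ctsA_const. apply ctsA_dist.
   apply ctsA_mult. apply ctsA_const. apply ctsA_mult; apply ctsA_dist. }
 destruct (cball_max x0 Rr F) as [z [Hz Hmax]]. lra.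
 { unfold F. apply cont_on_minus; auto. apply cont_u; auto. }
 { exists (1 + M * (Rr * Rr)). intros y Hy. unfold F, C.
   assert (u y <= u x0 + 1) by (apply Hub; eapply cball_le; eauto).
   unfold cball in Hy. assert (0 <= dist y x0) by apply dist_nonneg.
   assert (dist y x0 * dist y x0 <= Rr * Rr) by nra. assert (0 <= a) by nra. assert (0 <= a * dist y x0) by (apply Rmult_le_pos; auto). nra. }
 assert (HFz : F y0 <= F z) by (apply Hmax; auto).
 assert (HF0 : 0 < F y0) by (unfold F, C; lra).
 assert (Hdz0 : 0 < dist z x0).
 { destruct (Rle_lt_or_eq_dec _ _ (dist_nonneg z x0)) as [|E]; auto. exfalso.
   apply eq_sym, dist_zero_eq in E. subst z. unfold F, C in HFz. rewrite dist_self in HFz. lra. }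
 assert (Hdz : dist z x0 < Rr).
 { destruct (Rle_lt_or_eq_dec _ _ Hz) as [|E]; auto. exfalso.
   assert (u z <= u x0 + a * Rr - M * (Rr * Rr)) by (apply HT; auto). unfold F, C in HFz. rewrite E in HFz. lra. }
 set (dz := dist z x0) in *.
 set (t1 := qf x0 z / 2).
 assert (Hq : qf x0 z = dz * dz) by (unfold dz; rewrite dist_sq; auto).
 assert (Ht1 : 0 < t1) by (unfold t1; rewrite Hq; nra).
 set (h := fun t => u x0 + a * sg t1 t - M * t).
 set (h1 := fun t => a * sg1 t1 t - M). set (h2 := fun t => a * sg2 t1 t).
 assert (Dh : forall t, derivable_pt_lim h t (h1 t)).
 { intros t. unfold h, h1. apply dpl_aff. apply sg_der; auto. }
 assert (Dh1 : forall t, derivable_pt_lim h1 t (h2 t)).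
 { intros t. unfold h1, h2. apply dpl_aff0. apply sg1_der; auto. }
 assert (Ch2 : forall t, continuity_pt h2 t).
 { intros t. unfold h2. apply (continuity_pt_scal (sg2 t1)). apply sg2_cont; auto. }
 assert (Hphi : forall y, t1 <= qf x0 y -> tphi x0 h y = C y).
 { intros y Hy. unfold tphi, h, C. rewrite sg_eq by auto. rewrite dist_qf. rewrite sqrt_sqrt by apply qf_nonneg. ring. }
 assert (Hqz : t1 <= qf x0 z) by (unfold t1; rewrite Hq; nra).
 apply (val_contra (tphi x0 h) (tD x0 h1) (tD2 x0 h1 h2) z (-2 * M)).
 - apply test_C2; auto.
 - eapply cball_le; eauto.
 - destruct (ctsA_dist x0 z (Rr - dz)) as [d1 [Hd1 Hd1']]. lra.
   destruct (ctsA_qf x0 z t1) as [d2 [Hd2 Hd2']]. auto.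
   exists (Rmin d1 d2). split. apply Rmin_pos; auto.
   intros y _ Hy. assert (A := Hd1' y (Rlt_le_trans _ _ _ Hy (Rmin_l _ _))).
   assert (B := Hd2' y (Rlt_le_trans _ _ _ Hy (Rmin_r _ _))).
   rewrite Hphi, Hphi; auto.
   + apply (Hmax y). unfold cball. unfold Rabs in A. fold dz in A. destruct (Rcase_abs (dist y x0 - dz)); lra.
   + unfold Rabs in B. destruct (Rcase_abs (qf x0 y - qf x0 z)); unfold t1 in *; lra.
 - left. 
   assert (Hs : sqrt (qf x0 z) = dz) by (unfold dz; rewrite dist_qf; auto).
   assert (Hh1 : h1 (qf x0 z) = a / (2 * dz) - M).
   { unfold h1. rewrite sg1_eq by auto. rewrite Hs. field. lra. }
   assert (Hpos : 0 < h1 (qf x0 z)).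
   { rewrite Hh1. apply Rlt_0_minus. apply Rmult_lt_reg_r with (2 * dz). lra. 
     unfold Rdiv. rewrite Rmult_assoc, Rinv_l by lra. nra. }
   assert (Hg : grad_sq (tD x0 h1) z <> 0).
   { rewrite grad_sq_t. apply Rgt_not_eq. assert (0 < qf x0 z) by (rewrite Hq; nra).
     repeat apply Rmult_lt_0_compat; lra. }
   split; auto. rewrite inf_lap_t; auto. rewrite Hh1. unfold h2. rewrite sg2_eq by auto. rewrite Hs, Hq.
   field. lra.
 - lra.
Qed.
End Visc.
Lemma main_one {n} (Hn : (0 < n)%nat) (U : Rn n -> Prop) (u v : Rn n -> R) (x0 : Rn n) :
  is_open U -> U x0 -> cont_on (closure U) u -> cont_on (closure U) v -> sub_cond U u v ->
  S_plus_lim_exists U u x0.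
Proof. intros HU Hx0 Hcu Hcv Hsub.
 destruct (HU x0 Hx0) as [ro [Hro Hro']].
 destruct (Hcu x0 (in_closure U x0 Hx0) 1) as [du [Hdu Hdu']]. lra.
 destruct (Hcv x0 (in_closure U x0 Hx0) 1) as [dv [Hdv Hdv']]. lra.
 set (R0 := Rmin ro (Rmin du dv) / 2).
 assert (HR0 : 0 < R0) by (unfold R0; apply Rdiv_lt_0_compat; [repeat apply Rmin_pos; auto|lra]).
 assert (HR0a : R0 < ro) by (unfold R0; generalize (Rmin_l ro (Rmin du dv)); lra).
 assert (HR0b : R0 < du) by (unfold R0; generalize (Rmin_r ro (Rmin du dv)) (Rmin_l du dv) (Rmin_l ro (Rmin du dv)); intros; lra).
 assert (HR0c : R0 < dv) by (unfold R0; generalize (Rmin_r ro (Rmin du dv)) (Rmin_r du dv) (Rmin_l ro (Rmin du dv)); intros; lra).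
 assert (Hball : forall y, cball x0 R0 y -> U y) by (intros y Hy; apply Hro'; unfold cball in Hy; lra).
 set (u0 := u x0). set (M := Rabs (u0 - v x0) + 2).
 assert (HM : 0 < M) by (unfold M; generalize (Rabs_pos (u0 - v x0)); lra).
 assert (Hclose : forall y, cball x0 R0 y -> Rabs (u y - u0) < 1 /\ Rabs (v y - v x0) < 1).
 { intros y Hy. assert (closure U y) by (apply in_closure; auto). unfold cball in Hy. split.
   apply Hdu'; auto; lra. apply Hdv'; auto; lra. }
 assert (HMb : forall y, cball x0 R0 y -> u y - v y >= - M).
 { intros y Hy. destruct (Hclose y Hy) as [A B]. unfold M. unfold Rabs in *.
   destruct (Rcase_abs (u y - u0)); destruct (Rcase_abs (v y - v x0)); destruct (Rcase_abs (u0 - v x0)); lra. }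
 assert (Hub : forall y, cball x0 R0 y -> u y <= u0 + 1).
 { intros y Hy. destruct (Hclose y Hy) as [A _]. unfold Rabs in A. destruct (Rcase_abs (u y - u0)); lra. }
 set (k0 := exist (fun k => (k < n)%nat) 0%nat Hn : idx n).
 assert (Hsph : forall r, 0 < r -> sphere x0 r (shift x0 k0 r)).
 { intros r Hr. unfold sphere. rewrite dist_qf, qf_shift, qf_self.
   replace (0 + 2 * r * (x0 k0 - x0 k0) + r * r) with (r * r) by ring. apply sqrt_square; lra. }
 set (E := fun r s => exists y, sphere x0 r y /\ s = u y).
 assert (Hex : forall r, exists m, (0 < r <= R0 -> is_lub (E r) m)).
 { intros r. destruct (classic (0 < r <= R0)) as [Hr|Hr].
   - destruct (completeness (E r)) as [m Hm].
     + exists (u0 + 1). intros s [y [Hy ->]]. apply Hub. unfold cball, sphere in *. lra.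
     + exists (u (shift x0 k0 r)). exists (shift x0 k0 r). split; auto. apply Hsph; lra.
     + exists m; auto.
   - exists 0. intros; contradiction. }
 set (T := fun r => proj1_sig (constructive_indefinite_description _ (Hex r))).
 assert (HT : forall r, 0 < r <= R0 -> is_lub (E r) (T r)).
 { intros r Hr. unfold T. destruct (constructive_indefinite_description _ (Hex r)); auto. }
 assert (HT1 : forall r, 0 < r <= R0 -> forall y, sphere x0 r y -> u y <= T r).
 { intros r Hr y Hy. apply (proj1 (HT r Hr)). exists y; auto. }
 assert (HT2 : forall r b, 0 < r <= R0 -> (forall y, sphere x0 r y -> u y <= b) -> T r <= b).
 { intros r b Hr Hb. apply (proj2 (HT r Hr)). intros s [y [Hy ->]]. auto. }
 set (S := fun r => (T r - u0) / r).
 assert (F1 : forall r, 0 < r <= R0 -> - M * r <= S r).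
 { intros r Hr. assert (A := claimB Hn U u v x0 R0 M Hball Hcu Hsub HM HMb Hub r (T r) (proj1 Hr) (proj2 Hr) (HT1 r Hr)).
   unfold S. apply Rmult_le_reg_r with r. lra.
   assert (E1 : (T r - u0) / r * r = T r - u0) by (field; lra). rewrite E1.
   fold u0 in A. nra. }
 set (g := fun R => Rmax (S R + M * R) (2 * M * R)).
 assert (F2 : forall r Rr, 0 < r -> r < Rr -> Rr <= R0 -> S r <= g Rr).
 { intros r Rr Hr HrR HRR. set (a := g Rr).
   assert (Ha1 : S Rr + M * Rr <= a) by apply Rmax_l.
   assert (Ha2 : 2 * M * Rr <= a) by apply Rmax_r.
   assert (Hs : forall y, sphere x0 Rr y -> u y <= u x0 + a * Rr - M * (Rr * Rr)).
   { intros y Hy. assert (u y <= T Rr) by (apply HT1; auto; lra).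
     unfold S in Ha1. fold u0. 
     assert ((T Rr - u0) / Rr * Rr = T Rr - u0) by (field; lra). nra. }
   assert (C := claimA U u v x0 R0 M Hball Hcu Hsub HM HMb Hub Rr a ltac:(lra) HRR Ha2 Hs).
   unfold S. apply Rmult_le_reg_r with r. lra.
   assert (E1 : (T r - u0) / r * r = T r - u0) by (field; lra). rewrite E1.
   assert (T r <= u0 + a * r).
   { apply HT2. lra. intros y Hy. unfold sphere in Hy. assert (cball x0 Rr y) by (unfold cball; lra).
     specialize (C y H). rewrite Hy in C. fold u0 in C. nra. }
   lra. }
 set (E' := fun x => exists Rr, 0 < Rr < R0 /\ x = - g Rr).
 destruct (completeness E') as [lam [Hl1 Hl2]].
 { exists 0. intros x [Rr [HRr ->]]. unfold g. generalize (Rmax_r (S Rr + M * Rr) (2 * M * Rr)). nra. }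
 { exists (- g (R0 / 2)). exists (R0 / 2). split; auto; lra. }
 set (L := - lam).
 assert (P1 : forall Rr, 0 < Rr < R0 -> L <= g Rr).
 { intros Rr HRr. assert (- g Rr <= lam) by (apply Hl1; exists Rr; auto). unfold L; lra. }
 assert (P2 : forall e, 0 < e -> exists R1, 0 < R1 < R0 /\ g R1 < L + e).
 { intros e He. destruct (classic (exists R1, 0 < R1 < R0 /\ g R1 < L + e)) as [|Hno]; auto. exfalso.
   assert (lam <= lam - e).
   { apply Hl2. intros x [Rr [HRr ->]]. apply Rnot_lt_le. intro. apply Hno. exists Rr. split; auto.
     unfold L; lra. }
   lra. }
 exists L. intros eps He. destruct (P2 eps He) as [R1 [HR1 HgR1]].
 exists (Rmin R1 (eps / (3 * M))). split.
 { apply Rmin_pos. lra. apply Rdiv_lt_0_compat; lra. }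
 intros r m Hr Hrd _ [[y [Hy Hym]] Hm].
 assert (Hr1 : r < R1) by (eapply Rlt_le_trans; [apply Hrd|apply Rmin_l]).
 assert (Hr2 : r < eps / (3 * M)) by (eapply Rlt_le_trans; [apply Hrd|apply Rmin_r]).
 assert (HrM : 3 * M * r < eps).
 { apply Rmult_lt_compat_l with (r := 3 * M) in Hr2. 2: lra.
   replace (3 * M * (eps / (3 * M))) with eps in Hr2 by (field; lra). lra. }
 assert (Em : m = T r).
 { apply Rle_antisym. rewrite <- Hym. apply HT1; auto; lra. apply HT2; auto. lra. }
 subst m. rewrite Em. fold u0.
 assert (Up : S r <= g R1) by (apply F2; lra).
 assert (Lo1 : - M * r <= S r) by (apply F1; lra).
 assert (Lo2 : L <= g r) by (apply P1; lra).
 unfold g in Lo2. unfold Rmax in Lo2.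
 replace (- M * r) with (- (M * r)) in Lo1 by ring. replace (2 * M * r) with (2 * (M * r)) in Lo2 by ring.
 replace (3 * M * r) with (3 * (M * r)) in HrM by ring.
 assert (0 <= M * r) by nra. set (mr := M * r) in *. destruct (Rle_dec (S r + mr) (2 * mr));
 change ((T r - u0) / r) with (S r); unfold Rabs; destruct (Rcase_abs (S r - L)); lra.
Qed.

Theorem mainTheorem10 (n : nat) (U : Rn n -> Prop) (u1 u2 : Rn n -> R) :
  (0 < n)%nat ->
  is_domain U -> is_bounded U -> smooth_boundary U ->
  cont_on (closure U) u1 -> cont_on (closure U) u2 ->
  visc_solution U u1 u2 ->
  forall x0, U x0 -> S_plus_lim_exists U u1 x0 /\ S_plus_lim_exists U u2 x0.
Proof.
  intros Hn [HU _] _ _ Hc1 Hc2 [[_ [_ [Hs1 Hs2]]] _] x0 Hx0. split.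
  - apply (main_one Hn U u1 u2); auto.
  - apply (main_one Hn U u2 u1); auto.
Qed.
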